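(* Let $\mathcal{A} = (V, V_0, V_1, E, v_I)$ be an arena with $n$ vertices and $w \colon E \to -\mathbb{N} \cup \{\mathrm{R}\}$, and let $W$ be the largest absolute value of an integer weight in the image of $w$. If there is a $cap \in \mathbb{N}$ such that Player~$0$ wins $(\mathcal{A}, \mathsf{Recharge}(w, cap))$, then she also wins $(\mathcal{A}, \mathsf{Recharge}(w, 3\cdot(n-1)\cdot W))$, and she wins the latter game with a finite-state strategy of size three.
   Context: An arena $\mathcal{A} = (V, V_0, V_1, E, v_I)$ consists of a finite directed graph $(V,E)$ in which every vertex has at least one outgoing edge, a partition $V = V_0 \uplus V_1$, and an initial vertex $v_I$. A play is an infinite path $v_0 v_1 \cdots$ with $v_0 = v_I$. A strategy for Player~$i$ is a map $\sigma \colon V^* V_i \to V$ with $(v, \sigma(xv)) \in E$; a play is consistent with $\sigma$ if $v_{n+1} = \sigma(v_0\cdots v_n)$ whenever $v_n \in V_i$. Player~$0$ wins $(\mathcal{A}, \mathrm{Win})$ (with $\sigma$) if all plays consistent with $\sigma$ lie in $\mathrm{Win}$. A memory structure $\mathcal{M} = (M, m_I, \mathrm{Upd})$ has a finite set $M$ of states, initial state $m_I$, update $\mathrm{Upd} \colon M \times E \to M$, extended by $\mathrm{Upd}^+(v_0) = m_I$, $\mathrm{Upd}^+(v_0\cdots v_n v_{n+1}) = \mathrm{Upd}(\mathrm{Upd}^+(v_0\cdots v_n),(v_n,v_{n+1}))$; with a next-move function $\mathrm{Nxt} \colon V_0 \times M \to V$ (with $(v,\mathrm{Nxt}(v,m))\in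 E$) it induces the strategy $\sigma(v_0\cdots v_k) = \mathrm{Nxt}(v_k, \mathrm{Upd}^+(v_0\cdots v_k))$; such a strategy is finite-state of size $|M|$. A recharge weight function $w \colon E \to -\mathbb{N} \cup \{\mathrm{R}\}$ labels each edge with a non-positive integer or the recharge action $\mathrm{R}$. For a finite path $x$ without $\mathrm{R}$-edges, $\mathrm{EL}(x)$ is the sum of its edge weights. $\mathrm{EL}_{cap}(v_0\cdots v_k) = cap + \mathrm{EL}(x)$ where $x$ is the longest suffix of $v_0\cdots v_k$ containing no $\mathrm{R}$-edge. $\mathsf{Recharge}(w,cap) = \{v_0 v_1 \cdots \mid \forall k.\ \mathrm{EL}_{cap}(v_0\cdots v_k) \ge 0\}$. *)

(* Defs.v *)
From mathcomp Require Import all_boot all_order all_algebra.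
Set Implicit Arguments. Unset Strict Implicit. Unset Printing Implicit Defensive.
Import GRing.Theory Num.Theory.

(* Arena over a finite vertex type V: V0 : pred V is Player 0's vertices
   (V1 is its complement), E : rel V is the edge relation, vI the initial
   vertex.  Every vertex must have a successor. *)
Definition arena_total (V : finType) (E : rel V) : Prop :=
  forall v, exists v', E v v'.

Definition is_play (V : finType) (E : rel V) (vI : V) (p : nat -> V) : Prop :=
  p 0 = vI /\ forall k, E (p k) (p k.+1).

(* A strategy for Player 0: sigma x v is the move after history x ++ [:: v]
   (v the current vertex); it must follow an edge whenever v \in V0. *)
Definition strategy (V : finType) := seq V -> V -> V.

Definition valid_strategy (V : finType) (V0 : pred V) (E : rel V)
  (sigma : strategy V) : Prop :=
  forall x v, v \in V0 -> E v (sigma x v).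

Definition consistent (V : finType) (V0 : pred V) (sigma : strategy V)
  (p : nat -> V) : Prop :=
  forall n, p n \in V0 -> p n.+1 = sigma [seq p i | i <- iota 0 n] (p n).

Definition wins_with (V : finType) (V0 : pred V) (E : rel V) (vI : V)
  (Win : (nat -> V) -> Prop) (sigma : strategy V) : Prop :=
  valid_strategy V0 E sigma /\
  forall p, is_play E vI p -> consistent V0 sigma p -> Win p.

Definition wins (V : finType) (V0 : pred V) (E : rel V) (vI : V)
  (Win : (nat -> V) -> Prop) : Prop :=
  exists sigma, wins_with V0 E vI Win sigma.

(* Recharge weights: w u v = None is the recharge action R,
   w u v = Some d is the (non-positive) integer weight -d. *)
Definition rweight (V : finType) := V -> V -> option nat.

(* EL_cap of the prefix p 0 ... p k: cap plus the sum of the weights on the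
   longest suffix without R-edge (computed incrementally: an R-edge resets
   the level to cap, an integer edge adds its weight). *)
Fixpoint ELcap (V : finType) (w : rweight V) (cap : nat) (p : nat -> V)
  (k : nat) : int :=
  match k with
  | 0 => cap%:Z
  | k'.+1 => match w (p k') (p k) with
             | None => cap%:Z
             | Some d => (ELcap w cap p k' - d%:Z)%R
             end
  end.

Definition Recharge (V : finType) (w : rweight V) (cap : nat) :
  (nat -> V) -> Prop :=
  fun p => forall k, (0 <= ELcap w cap p k)%R.

(* W: largest absolute value of an integer weight on an edge (0 if none). *)
Definition maxW (V : finType) (E : rel V) (w : rweight V) : nat :=
  \max_(e : V * V | E e.1 e.2)
     (match w e.1 e.2 with Some d => d | None => 0 end).

Fixpoint upd_go (V : finType) (M : Type) (upd : M -> V -> V -> M)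
  (m : M) (prev : V) (s : seq V) : M :=
  match s with
  | [::] => m
  | v :: s' => upd_go upd (upd m prev v) v s'
  end.

(* Upd^+ of v0 v1 ... vn (with Upd^+ of the empty sequence set to mI,
   which is never used). *)
Definition upd_plus (V : finType) (M : Type) (mI : M) (upd : M -> V -> V -> M)
  (s : seq V) : M :=
  match s with
  | [::] => mI
  | v0 :: s' => upd_go upd mI v0 s'
  end.

Definition mem_strategy (V : finType) (M : Type) (mI : M)
  (upd : M -> V -> V -> M) (nxt : V -> M -> V) : strategy V :=
  fun x v => nxt v (upd_plus mI upd (rcons x v)).

(* Main.v *)
Require Import Defs.
From mathcomp Require Import all_boot all_order all_algebra.
From mathcomp Require Import zify.
From Stdlib Require Import ClassicalEpsilon.
Set Implicit Arguments. Unset Strict Implicit. Unset Printing Implicit Defensive.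
Import GRing.Theory Num.Theory.

Definition classicb (P : Prop) : bool :=
  if excluded_middle_informative P then true else false.

Lemma classicbP (P : Prop) : reflect P (classicb P).
Proof. rewrite /classicb; case: excluded_middle_informative => H; constructor => //. Qed.

Definition nextv (V : finType) (V0 : pred V) (E : rel V) (sigma : strategy V)
  (pre : nat -> V) (K : nat) (h : seq V) (v : V) (n : nat) : V :=
  if n < K then pre n.+1 else if v \in V0 then sigma h v
  else odflt v [pick u | E v u].

Fixpoint pref (V : finType) (V0 : pred V) (E : rel V) (sigma : strategy V)
  (pre : nat -> V) (K : nat) (n : nat) : seq V * V :=
  match n with
  | 0 => ([::], pre 0)
  | n'.+1 => let hv := pref V0 E sigma pre K n' in
             (rcons hv.1 hv.2, nextv V0 E sigma pre K hv.1 hv.2 n')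
  end.

Definition ext (V : finType) (V0 : pred V) (E : rel V) (sigma : strategy V)
  (pre : nat -> V) (K : nat) (n : nat) : V := (pref V0 E sigma pre K n).2.

Lemma pref_hist (V : finType) (V0 : pred V) (E : rel V) (sigma : strategy V)
  (pre : nat -> V) (K : nat) (n : nat) :
  (pref V0 E sigma pre K n).1 = [seq ext V0 E sigma pre K i | i <- iota 0 n].
Proof.
elim: n => [//|n IH].
rewrite -[X in iota 0 X]addn1 iotaD map_cat cats1 -IH //.
Qed.

Lemma ext_pre (V : finType) (V0 : pred V) (E : rel V) (sigma : strategy V)
  (pre : nat -> V) (K : nat) (n : nat) : n <= K -> ext V0 E sigma pre K n = pre n.
Proof.
elim: n => [//|n IH] Hn.
by rewrite /ext /= /nextv Hn.
Qed.

Lemma ext_next (V : finType) (V0 : pred V) (E : rel V) (sigma : strategy V)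
  (pre : nat -> V) (K : nat) (n : nat) :
  ext V0 E sigma pre K n.+1 =
  nextv V0 E sigma pre K [seq ext V0 E sigma pre K i | i <- iota 0 n]
        (ext V0 E sigma pre K n) n.
Proof. by rewrite /ext /= pref_hist. Qed.

Lemma ELcap_eq (V : finType) (w : rweight V) (cap : nat) (p q : nat -> V) j :
  (forall i, i <= j -> p i = q i) -> ELcap w cap p j = ELcap w cap q j.
Proof.
elim: j => [//|j IH] H /=.
rewrite (H j (leqnSn j)) (H j.+1 (leqnn _)) IH // => i Hi.
by apply: H; apply: leq_trans Hi _.
Qed.

Lemma ELcap_le (V : finType) (w : rweight V) (cap : nat) (p : nat -> V) j :
  (ELcap w cap p j <= cap%:Z)%R.
Proof.
elim: j => [|j IH] /=; first by [].
case: (w _ _) => [d|] //; lia.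
Qed.

Definition Reach (V : finType) (V0 : pred V) (E : rel V) (vI : V)
  (w : rweight V) (sigma : strategy V) (c : nat) (v : V) (e : nat) : Prop :=
  exists p, is_play E vI p /\ consistent V0 sigma p /\
    exists k, p k = v /\ ELcap w c p k = Posz e.

Lemma reach_step (V : finType) (V0 : pred V) (E : rel V) (vI : V)
  (w : rweight V) (sigma : strategy V) (c : nat) p k :
  wins_with V0 E vI (Recharge w c) sigma ->
  is_play E vI p -> consistent V0 sigma p ->
  exists e', Reach V0 E vI w sigma c (p k.+1) e' /\
    match w (p k) (p k.+1) with
    | None => True
    | Some d => ((e' + d)%:Z = ELcap w c p k)%R
    end.
Proof.
move=> [_ Hw] Hp Hc.
have H0 := Hw p Hp Hc k.+1.
exists `|ELcap w c p k.+1|%N; split.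
  exists p; split => //; split => //; exists k.+1; split => //; lia.
move: H0 => /=. case: (w _ _) => [d|] // H0. lia.
Qed.

Lemma reach_le (V : finType) (V0 : pred V) (E : rel V) (vI : V)
  (w : rweight V) (sigma : strategy V) (c : nat) v e :
  Reach V0 E vI w sigma c v e -> e <= c.
Proof.
move=> [p [_ [_ [k [_ Hk]]]]].
have := ELcap_le w c p k; rewrite Hk; lia.
Qed.


Lemma reach_succ0 (V : finType) (V0 : pred V) (E : rel V) (vI : V)
  (w : rweight V) (sigma : strategy V) (c : nat) v e :
  wins_with V0 E vI (Recharge w c) sigma ->
  Reach V0 E vI w sigma c v e ->
  exists u, E v u /\ exists e', Reach V0 E vI w sigma c u e' /\
    match w v u with None => True | Some d => e' + d = e end.
Proof.
move=> Hwin [p [Hp [Hc [k [Hpk Hk]]]]].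
have [e' [He' Hm]] := reach_step k Hwin Hp Hc.
exists (p k.+1); split; first by rewrite -Hpk; apply: Hp.2.
exists e'; split => //; move: Hm; rewrite Hpk Hk.
case: (w _ _) => // d; lia.
Qed.

Lemma reach_succ1 (V : finType) (V0 : pred V) (E : rel V) (vI : V)
  (w : rweight V) (sigma : strategy V) (c : nat) v e u :
  arena_total E ->
  wins_with V0 E vI (Recharge w c) sigma ->
  Reach V0 E vI w sigma c v e -> v \notin V0 -> E v u ->
  exists e', Reach V0 E vI w sigma c u e' /\
    match w v u with None => True | Some d => e' + d = e end.
Proof.
move=> Htot Hwin [p [Hp [Hc [k [Hpk Hk]]]]] Hv Hvu.
pose pre i := if i <= k then p i else u.
pose q := ext V0 E sigma pre k.+1.
have Hqp : forall i, i <= k -> q i = p i.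
  by move=> i Hi; rewrite /q ext_pre /pre ?Hi //; apply: leq_trans Hi _.
have Hqk : q k.+1 = u by rewrite /q ext_pre // /pre ltnn.
have Hlate : forall n, k < n -> q n.+1 =
   (if q n \in V0 then sigma [seq q i | i <- iota 0 n] (q n)
    else odflt (q n) [pick u | E (q n) u]).
  by move=> n Hn; rewrite /q ext_next /nextv ltnNge Hn.
have Hplay : is_play E vI q.
  split; first by rewrite -Hp.1; exact: (Hqp 0 (leq0n k)).
  move=> n; case: (ltngtP n k) => Hnk.
  - by rewrite !Hqp //; [exact: Hp.2 | exact: ltnW].
  - rewrite Hlate //; case: ifP => HV0; first by apply: Hwin.1.
    case: pickP => [x //|Hn] /=.
    by have [x Hx] := Htot (q n); move: (Hn x); rewrite Hx.
  - by rewrite Hnk Hqk Hqp // Hpk.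
have Hcons : consistent V0 sigma q.
  move=> n HV0; case: (ltngtP n k) => Hnk.
  - rewrite !Hqp //; last exact: ltnW.
    rewrite Hc; last by rewrite -Hqp // ltnW.
    congr (sigma _ _).
    apply/eq_in_map => i; rewrite mem_iota add0n => Hi.
    by rewrite Hqp //; apply: ltnW; apply: leq_trans Hi _; apply: ltnW.
  - by rewrite Hlate // HV0.
  - by move: HV0; rewrite Hnk Hqp // Hpk (negbTE Hv).
have [e' [He' Hm]] := reach_step k Hwin Hplay Hcons.
exists e'; split; first by rewrite -Hqk.
move: Hm; rewrite Hqk Hqp // Hpk (ELcap_eq (q := p) _ _ Hqp) Hk.
case: (w _ _) => // d; lia.
Qed.

Lemma exists_play (V : finType) (V0 : pred V) (E : rel V) (vI : V)
  (sigma : strategy V) :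
  arena_total E -> valid_strategy V0 E sigma ->
  exists p, is_play E vI p /\ consistent V0 sigma p.
Proof.
move=> Htot Hval.
pose q := ext V0 E sigma (fun _ => vI) 0.
have Hlate : forall n, q n.+1 =
   (if q n \in V0 then sigma [seq q i | i <- iota 0 n] (q n)
    else odflt (q n) [pick u | E (q n) u]).
  by move=> n; rewrite /q ext_next /nextv.
exists q; split; [split|].
- by [].
- move=> n; rewrite Hlate; case: ifP => HV0; first by apply: Hval.
  case: pickP => [x //|Hn] /=.
  by have [x Hx] := Htot (q n); move: (Hn x); rewrite Hx.
- by move=> n HV0; rewrite Hlate HV0.
Qed.

Theorem corollary2 (V : finType) (V0 : pred V) (E : rel V) (vI : V)
  (w : rweight V) :
  arena_total E ->
  (exists cap : nat, wins V0 E vI (Recharge w cap)) ->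
  exists (M : finType) (mI : M) (upd : M -> V -> V -> M) (nxt : V -> M -> V),
    #|M| = 3 /\
    (forall v m, v \in V0 -> E v (nxt v m)) /\
    wins_with V0 E vI (Recharge w (3 * (#|V| - 1) * maxW E w))
      (mem_strategy mI upd nxt).
Proof.
move=> Htot [c [sigma Hwin]].
pose R := Reach V0 E vI w sigma c.
pose a v := fun e => classicb (R v e).
pose D v := has (a v) (iota 0 c.+1).
pose f v := find (a v) (iota 0 c.+1).
have RD : forall v e, R v e -> D v /\ f v <= e.
  move=> v e He; have Hec := reach_le He.
  have Ha : a v e by apply/classicbP.
  split; first by apply/hasP; exists e => //; rewrite mem_iota.
  rewrite leqNgt; apply/negP => Hlt.
  have := before_find 0 Hlt; rewrite nth_iota // ?add0n ?Ha //.
have DR : forall v, D v -> R v (f v).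
  move=> v Hv; have := nth_find 0 Hv; rewrite nth_iota ?add0n; first by move/classicbP.
  by move: Hv; rewrite /D has_find size_iota.
pose W := maxW E w.
pose g v := W * #|[set x | D x && (f x < f v)]|.
have gb : forall v, g v <= W * (#|V| - 1).
  move=> v; rewrite /g leq_mul2l; apply/orP; right.
  rewrite subn1 -(cardsC1 v); apply: subset_leq_card; apply/subsetP => x.
  rewrite !inE => /andP [_ H]; apply/eqP => Hx; move: H; rewrite Hx ltnn.
  done.
have gm : forall u v d, D u -> f u + d <= f v -> d <= W -> g u + d <= g v.
  move=> u v d Du Huv HdW.
  have Hsub : [set x | D x && (f x < f u)] \subset [set x | D x && (f x < f v)].
    apply/subsetP => x; rewrite !inE => /andP [-> H] /=.
    by apply: (leq_trans H); apply: leq_trans Huv; apply: leq_addr.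
  case: d Huv HdW => [|d] Huv HdW.
    by rewrite addn0 /g leq_mul2l (subset_leq_card Hsub) orbT.
  have Hsub' : u |: [set x | D x && (f x < f u)] \subset [set x | D x && (f x < f v)].
    rewrite subUset Hsub andbT sub1set inE Du /=.
    lia.
  have := subset_leq_card Hsub'; rewrite cardsU1 inE ltnn andbF /= /g.
  move: (#|_|) (#|_|) => n1 n2 Hab; nia.
have dW : forall v u d, E v u -> w v u = Some d -> d <= W.
  move=> v u d Hvu Hw.
  have := @leq_bigmax_cond _ (fun e : V * V => E e.1 e.2)
    (fun e : V * V => match w e.1 e.2 with Some d => d | None => 0 end) (v, u) Hvu.
  by rewrite /= Hw.
pose good v u := D u && (match w v u with None => true | Some d => g u + d <= g v end).
have prog : forall v u e', D v -> E v u -> R u e' ->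
    (match w v u with None => True | Some d => e' + d = f v end) -> good v u.
  move=> v u e' Dv Hvu Hu; have [Du Hfu] := RD _ _ Hu.
  rewrite /good Du /=; case Hw: (w v u) => [d|] // Hd.
  apply: gm => //; last exact: dW Hw.
  by rewrite -Hd leq_add2r.
have prog0 : forall v, v \in V0 -> D v -> exists u, E v u && good v u.
  move=> v HV Dv; have [u [Hvu [e' [He' Hm]]]] := reach_succ0 Hwin (DR v Dv).
  by exists u; rewrite Hvu; apply: prog Hm.
have prog1 : forall v u, v \notin V0 -> D v -> E v u -> good v u.
  move=> v u HV Dv Hvu; have [e' [He' Hm]] := reach_succ1 Htot Hwin (DR v Dv) HV Hvu.
  exact: prog Hm.
pose nxtv v := if [pick u | E v u && good v u] is Some u then u
               else odflt v [pick u | E v u].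
have Hgood0 : forall v, v \in V0 -> D v -> E v (nxtv v) && good v (nxtv v).
  move=> v HV Dv; rewrite /nxtv; case: pickP => [x //|Hn].
  by have [u Hu] := prog0 v HV Dv; move: (Hn u); rewrite Hu.
have Hvalid : forall v, E v (nxtv v).
  move=> v; rewrite /nxtv; case: pickP => [x /andP [] //|_].
  case: pickP => [x //|Hn] /=.
  by have [x Hx] := Htot v; move: (Hn x); rewrite Hx.
have DvI : D vI.
  have [p0 [Hp0 Hc0]] := exists_play vI Htot Hwin.1.
  apply: (proj1 (RD vI c _)); exists p0; split => //; split => //.
  by exists 0; split => //; exact: Hp0.1.
exists 'I_3, ord0, (fun m _ _ => m), (fun v _ => nxtv v).
split; first by rewrite card_ord.
split; first by move=> v m _; apply: Hvalid.
split; first by move=> x v _; apply: Hvalid.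
move=> p Hp Hc.
pose cap' := 3 * (#|V| - 1) * maxW E w.
have inv : forall k, D (p k) /\ (Posz (g (p k)) <= ELcap w cap' p k)%R.
  elim => [|k [Dk Hk]].
    rewrite Hp.1; split => //=; have := gb vI; rewrite /cap' -/W; lia.
  have Hgd : good (p k) (p k.+1).
    case: (boolP (p k \in V0)) => HV.
      by rewrite (Hc k HV) /mem_strategy; case/andP: (Hgood0 _ HV Dk).
    exact: prog1 HV Dk (Hp.2 k).
  move: Hgd; rewrite /good => /andP [Dk1 Hm]; split => //=.
  move: Hm; case: (w _ _) => [d|] Hd.
    lia.
  have := gb (p k.+1); rewrite /cap' -/W; lia.
move=> k; have [_ H] := inv k; move: H; rewrite /cap'; lia.
Qed.
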